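(* Let $(U(n))_{n\geqslant 0}$ be an arithmetic progression of positive integers, $U(n)=U(0)+nd$ with $d$ an integer, and let $S(n)=\overline{U(0)U(1)\cdots U(n-1)U(n)U(n-1)\cdots U(1)U(0)}$ for $n\geqslant 0$ (so $S(0)=U(0)$; e.g. for $U(n)=n+1$ this is $1,121,12321,\ldots$). Let $l$ be a positive integer. Then for every $n\geqslant 0$ such that $U(n)$, $U(n+1)$, $U(n+2)$, $U(n+3)$ all have exactly $l$ decimal digits, $$S(n+3) - \left(1+10^l+10^{2l}\right) S(n+2) + \left(10^l+10^{2l}+10^{3l}\right) S(n+1) - 10^{3l}\, S(n) = 0.$$
   Context: For positive integers $a_0,\ldots,a_k$, $\overline{a_0a_1\cdots a_k}$ denotes the integer whose decimal expansion is the decimal expansion of $a_0$ followed by that of $a_1$, ..., followed by that of $a_k$. The sequence $S$ is the concatenation of the right-concatenation $\overline{U(0)\cdots U(n)}$ with the left-concatenation $\overline{U(n-1)\cdots U(0)}$. *)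

(* Defs.v *)
From mathcomp Require Import all_boot all_order all_algebra.
Set Implicit Arguments. Unset Strict Implicit. Unset Printing Implicit Defensive.

Definition ndigits (x : nat) : nat := if x == 0 then 0 else (trunc_log 10 x).+1.

Definition dconcat (a b : nat) : nat := a * 10 ^ ndigits b + b.

Definition dconcat_seq (s : seq nat) : nat := foldl dconcat 0 s.

Definition Sseq (U : nat -> nat) (n : nat) : nat :=
  dconcat_seq ([seq U i | i <- iota 0 n.+1] ++ rev [seq U i | i <- iota 0 n]).

(* Main.v *)
Require Import Defs.
From mathcomp Require Import all_boot all_order all_algebra.
From mathcomp Require Import ring.
Import GRing.Theory.
Local Open Scope ring_scope.

Lemma foldl_acc (t : seq nat) (acc : nat) :
  foldl dconcat acc t = (acc * 10 ^ sumn (map ndigits t) + foldl dconcat 0 t)%N.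
Proof.
elim: t acc => [|x t IH] acc /=; first by rewrite muln1 addn0.
rewrite IH (IH (dconcat 0 x)) /dconcat /= mul0n add0n expnD.
rewrite mulnDl -!mulnA addnA; congr (_ + _)%N; rewrite mulnC -mulnA; congr (_ * _)%N.
Qed.

Lemma dcat (s t : seq nat) :
  dconcat_seq (s ++ t) = (dconcat_seq s * 10 ^ sumn (map ndigits t) + dconcat_seq t)%N.
Proof. by rewrite /dconcat_seq foldl_cat foldl_acc. Qed.

Lemma PX k : Posz (10 ^ k)%N = (10 : int) ^+ k.
Proof. by rewrite -natz natrX. Qed.

Definition PP (U : nat -> nat) m := dconcat_seq [seq U i | i <- iota 0 m.+1].
Definition QQ (U : nat -> nat) m := dconcat_seq (rev [seq U i | i <- iota 0 m]).
Definition EE (U : nat -> nat) m := sumn (map ndigits (rev [seq U i | i <- iota 0 m])).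

Lemma mapS (U : nat -> nat) m :
  [seq U i | i <- iota 0 m.+1] = [seq U i | i <- iota 0 m] ++ [:: U m].
Proof. by rewrite -addn1 iotaD map_cat. Qed.

Lemma hS U m : (Sseq U m)%:Z = (PP U m)%:Z * 10 ^+ (EE U m) + (QQ U m)%:Z.
Proof. by rewrite /Sseq dcat PoszD PoszM PX. Qed.

Lemma hP U m : (PP U m.+1)%:Z = (PP U m)%:Z * 10 ^+ (ndigits (U m.+1)) + (U m.+1)%:Z.
Proof.
rewrite /PP mapS dcat /= addn0 PoszD PoszM PX.
by rewrite /dconcat_seq /= /dconcat mul0n add0n.
Qed.

Lemma hQ U m : (QQ U m.+1)%:Z = (U m)%:Z * 10 ^+ (EE U m) + (QQ U m)%:Z.
Proof.
rewrite /QQ /EE mapS rev_cat /= -cat1s dcat PoszD PoszM PX.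
by rewrite /dconcat_seq /= /dconcat mul0n add0n.
Qed.

Lemma hE U m : EE U m.+1 = (ndigits (U m) + EE U m)%N.
Proof. by rewrite /EE mapS rev_cat. Qed.

Theorem lemma3 (U : nat -> nat) (d : int) (l : nat)
  (hpos : forall n, (0 < U n)%N)
  (hap : forall n, (U n)%:Z = (U 0)%:Z + n%:Z * d)
  (hl : (0 < l)%N) (n : nat)
  (hdig : forall k, (k <= 3)%N -> ndigits (U (n + k)%N) = l) :
  (Sseq U (n + 3))%:Z
    - (1 + 10 ^+ l + 10 ^+ (2 * l)) * (Sseq U (n + 2))%:Z
    + (10 ^+ l + 10 ^+ (2 * l) + 10 ^+ (3 * l)) * (Sseq U (n + 1))%:Z
    - 10 ^+ (3 * l) * (Sseq U n)%:Z = 0 :> int.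
Proof.
have hU : forall k, (U (n + k)%N)%:Z = (U n)%:Z + k%:Z * d.
  move=> k; rewrite hap (hap n) PoszD; ring.
have d0 := hdig 0%N isT; have d1 := hdig 1%N isT; have d2 := hdig 2%N isT;
have d3 := hdig 3%N isT.
rewrite addn0 in d0.
rewrite !hS !addnS !addn0 !hP !hQ !hE.
rewrite !addnS !addn0 in d1 d2 d3.
have hU1 := hU 1%N; have hU2 := hU 2%N; have hU3 := hU 3%N.
rewrite !addnS !addn0 in hU1 hU2 hU3.
have e2 : (10:int)^+(2 * l) = (10^+l)^+2 by rewrite mulnC exprM.
have e3 : (10:int)^+(3 * l) = (10^+l)^+3 by rewrite mulnC exprM.
rewrite e2 e3 d0 d1 d2 d3 hU1 hU2 hU3 !exprD.
ring.
Qed.
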